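(* Let $R$ be a commutative ring, $S$ a multiplicative subset of $R$, and $M$ an $R$-module. The following are equivalent: (1) $M$ is uniformly $S$-Noetherian; (2) there exists $s\in S$ such that every ascending chain $M_1\subseteq M_2\subseteq\cdots$ of submodules of $M$ is stationary with respect to $s$, i.e. there is $k\ge 1$ with $sM_n\subseteq M_k$ for all $n\ge k$; (3) there exists $s\in S$ such that every nonempty family $\mathcal F$ of submodules of $M$ has a maximal element with respect to $s$, i.e. some $M_0\in\mathcal F$ such that $sN\subseteq M_0$ for every $N\in\mathcal F$ with $M_0\subseteq N$.
   Context: All rings are commutative with identity; a multiplicative subset $S$ contains $1$ and is closed under multiplication. An $R$-module $M$ is uniformly $S$-Noetherian ($u$-$S$-Noetherian) if there exists a single $s\in S$ such that for every submodule $N$ of $M$ there is a finitely generated submodule $F\subseteq N$ with $sN\subseteq F$. A ring is $u$-$S$-Noetherian if it is so as a module over itself. *)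

(* Defs.v *)
From HB Require Import structures.
From mathcomp Require Import all_boot all_order all_algebra.
Set Implicit Arguments. Unset Strict Implicit. Unset Printing Implicit Defensive.
Import GRing.Theory.
Local Open Scope ring_scope.

Definition mult_subset (R : comPzRingType) (S : R -> Prop) : Prop :=
  S 1 /\ (forall a b, S a -> S b -> S (a * b)).

Definition is_submodule (R : comPzRingType) (M : lmodType R) (N : M -> Prop) : Prop :=
  N 0 /\ (forall x y, N x -> N y -> N (x + y)) /\ (forall (r : R) x, N x -> N (r *: x)).

Definition subm_le (R : comPzRingType) (M : lmodType R) (A B : M -> Prop) : Prop :=
  forall x, A x -> B x.

Definition smul_sub (R : comPzRingType) (M : lmodType R) (s : R) (N A : M -> Prop) : Prop :=
  forall x, N x -> A (s *: x).

Definition span_of (R : comPzRingType) (M : lmodType R) (l : seq M) (x : M) : Prop :=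
  exists c : 'I_(size l) -> R, x = \sum_(i < size l) c i *: nth 0 l i.

Definition fin_gen (R : comPzRingType) (M : lmodType R) (F : M -> Prop) : Prop :=
  exists l : seq M, forall x, F x <-> span_of l x.

Definition u_S_noetherian (R : comPzRingType) (S : R -> Prop) (M : lmodType R) : Prop :=
  exists s, S s /\
    forall N : M -> Prop, is_submodule N ->
      exists F : M -> Prop, fin_gen F /\ subm_le F N /\ smul_sub s N F.

Definition S_stationary_chains (R : comPzRingType) (S : R -> Prop) (M : lmodType R) : Prop :=
  exists s, S s /\
    forall Ms : nat -> (M -> Prop),
      (forall n, is_submodule (Ms n)) ->
      (forall n, subm_le (Ms n) (Ms n.+1)) ->
      exists k, forall n, (k <= n)%N -> smul_sub s (Ms n) (Ms k).

Definition S_maximal_condition (R : comPzRingType) (S : R -> Prop) (M : lmodType R) : Prop :=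
  exists s, S s /\
    forall Fam : (M -> Prop) -> Prop,
      (forall N, Fam N -> is_submodule N) ->
      (exists N, Fam N) ->
      exists M0, Fam M0 /\ forall N, Fam N -> subm_le M0 N -> smul_sub s N M0.

(* Main.v *)
Require Import Defs.
From mathcomp Require Import all_boot all_order all_algebra.
From Stdlib Require Import Classical ClassicalEpsilon.
Import GRing.Theory.
Local Open Scope ring_scope.

Lemma span_sub (R : comPzRingType) (M : lmodType R) (N : M -> Prop) (l : seq M) :
  is_submodule N -> (forall y, y \in l -> N y) -> forall x, span_of l x -> N x.
Proof.
move=> [N0 [ND NZ]] Hl x [c ->].
apply: (big_ind N) => // i _.
apply: NZ; apply: Hl; exact: mem_nth.
Qed.

Lemma span_submod (R : comPzRingType) (M : lmodType R) (l : seq M) :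
  is_submodule (span_of l).
Proof.
split; first by exists (fun _ => 0); rewrite big1 // => i _; rewrite scale0r.
split.
  move=> x y [c1 ->] [c2 ->]; exists (fun i => c1 i + c2 i).
  rewrite -big_split /=; apply: eq_bigr => i _; by rewrite scalerDl.
move=> r x [c ->]; exists (fun i => r * c i); rewrite scaler_sumr.
apply: eq_bigr => i _; by rewrite scalerA.
Qed.

Lemma mem_span (R : comPzRingType) (M : lmodType R) (l : seq M) y :
  y \in l -> span_of l y.
Proof.
move=> yl; have H : (index y l < size l)%N by rewrite index_mem.
exists (fun i => if i == Ordinal H then 1 else 0).
rewrite (bigD1 (Ordinal H)) //= eqxx scale1r big1 ?addr0 ?nth_index // => i /negbTE ->.
by rewrite scale0r.
Qed.

Lemma span_cons (R : comPzRingType) (M : lmodType R) (l : seq M) x y :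
  span_of l y -> span_of (x :: l) y.
Proof.
apply: span_sub; first exact: span_submod.
move=> z zl; apply: mem_span; by rewrite inE zl orbT.
Qed.

Lemma chain_mono (R : comPzRingType) (M : lmodType R) (Ms : nat -> M -> Prop) :
  (forall n, subm_le (Ms n) (Ms n.+1)) ->
  forall a b, (a <= b)%N -> subm_le (Ms a) (Ms b).
Proof.
move=> H a; elim=> [|b IH]; first by rewrite leqn0 => /eqP ->.
rewrite leq_eqVlt => /orP [/eqP -> //|ab] x /IH; move/(_ ab); exact: H.
Qed.

Lemma one_two (R : comPzRingType) (S : R -> Prop) (M : lmodType R) :
  u_S_noetherian S M -> S_stationary_chains S M.
Proof.
move=> [s [Ss H]]; exists s; split => // Ms Hsub Hch.
have mono := @chain_mono _ _ Ms Hch.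
pose N x := exists n, Ms n x.
have NS : is_submodule N.
  split; first by exists 0%N; case: (Hsub 0%N).
  split.
    move=> x y [a xa] [b yb]; exists (maxn a b).
    case: (Hsub (maxn a b)) => _ [D _]; apply: D.
      exact: (mono a _ (leq_maxl a b) _ xa).
    exact: (mono b _ (leq_maxr a b) _ yb).
  move=> r x [a xa]; exists a; case: (Hsub a) => _ [_ Z]; exact: Z.
have [F [[l Fl] [FN sF]]] := H N NS.
have [k Hk] : exists k, forall y, y \in l -> Ms k y.
  have : forall y, y \in l -> N y.
    move=> y yl; apply: FN; apply/Fl; exact: mem_span.
  elim: l {Fl} => [|a l IH] Hl; first by exists 0%N.
  have [k1 H1] := IH (fun y yl => Hl y (mem_behead (s:=a :: l) yl)).
  have [k2 H2] := Hl a (mem_head _ _).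
  exists (maxn k1 k2) => y; rewrite inE => /orP [/eqP ->|yl].
    exact: (mono k2 _ (leq_maxr k1 k2) _ H2).
  exact: (mono k1 _ (leq_maxl k1 k2) _ (H1 y yl)).
exists k => n kn x xn.
have : F (s *: x) by apply: sF; exists n.
move/Fl; exact: span_sub (Hsub k) Hk _.
Qed.

Lemma three_two (R : comPzRingType) (S : R -> Prop) (M : lmodType R) :
  S_maximal_condition S M -> S_stationary_chains S M.
Proof.
move=> [s [Ss H]]; exists s; split => // Ms Hsub Hch.
have h1 : forall N, (exists n, N = Ms n) -> is_submodule N by move=> N [n ->].
have h2 : exists N, exists n, N = Ms n by exists (Ms 0%N), 0%N.
have [M0 [[k ->] Hk]] := H (fun N => exists n, N = Ms n) h1 h2.
exists k => n kn; apply: Hk; first by exists n.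
exact: (@chain_mono _ _ Ms Hch).
Qed.

Lemma three_one (R : comPzRingType) (S : R -> Prop) (M : lmodType R) :
  S_maximal_condition S M -> u_S_noetherian S M.
Proof.
move=> [s [Ss H]]; exists s; split => // N NS.
have h1 : forall F, (is_submodule F /\ fin_gen F /\ subm_le F N) -> is_submodule F
  by move=> F [].
have h2 : exists F, is_submodule F /\ fin_gen F /\ subm_le F N.
  exists (span_of [::]); split; first exact: span_submod.
  split; first by exists [::].
  apply: span_sub => // y; by rewrite in_nil.
have [M0 [[M0s [[l Hl] M0N]] Hmax]] :=
  H (fun F => is_submodule F /\ fin_gen F /\ subm_le F N) h1 h2.
exists M0; split; first by exists l.
split => // x Nx.
have : smul_sub s (span_of (x :: l)) M0.
  apply: Hmax.
  - split; first exact: span_submod.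
    split; first by exists (x :: l).
    apply: span_sub => // y; rewrite inE => /orP [/eqP ->|yl] //.
    apply: M0N; apply/Hl; exact: mem_span.
  - move=> y /Hl; exact: span_cons.
apply; apply: mem_span; exact: mem_head.
Qed.

Lemma two_three (R : comPzRingType) (S : R -> Prop) (M : lmodType R) :
  S_stationary_chains S M -> S_maximal_condition S M.
Proof.
move=> [s [Ss H]]; exists s; split => // Fam FS [N0 FN0].
apply: NNPP => Hno.
have step : forall T : {N | Fam N}, exists T' : {N | Fam N},
    subm_le (proj1_sig T) (proj1_sig T') /\ ~ smul_sub s (proj1_sig T') (proj1_sig T).
  move=> [A FA] /=; apply: NNPP => Hn; apply: Hno; exists A; split => // N FN AN.
  apply: NNPP => Hs; apply: Hn; by exists (exist _ N FN).
pose g T := proj1_sig (constructive_indefinite_description _ (step T)).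
have gP T := proj2_sig (constructive_indefinite_description _ (step T)).
pose t0 : {N | Fam N} := exist _ N0 FN0.
pose Ms n := proj1_sig (iter n g t0).
have [k Hk] := H Ms (fun n => FS _ (proj2_sig (iter n g t0)))
  (fun n => (gP (iter n g t0)).1).
exact: (gP (iter k g t0)).2 (Hk k.+1 (leqnSn k)).
Qed.

Theorem theorem2p8 (R : comPzRingType) (S : R -> Prop) (M : lmodType R) :
  mult_subset S ->
  (u_S_noetherian S M <-> S_stationary_chains S M) /\
  (S_stationary_chains S M <-> S_maximal_condition S M).
Proof.
move=> _; split; split.
- exact: one_two.
- by move=> /two_three /three_one.
- exact: two_three.
- exact: three_two.
Qed.
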